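(* Let $\mu(s)=\inf_{\varphi\in\mathcal{A}}E(\varphi;s)$ for $s>0$. Then $\mu(s)\le sC_1-C_2$ for all $s>0$, where $$C_1=3\delta R^3\Big(\int_0^R\varrho_0(z)z^4dz\Big)^{-1}>0,\qquad C_2=\Big(\int_0^R(12-9\gamma)K\varrho_0^\gamma(z)z^2dz\Big)\Big(\int_0^R\varrho_0(z)z^4dz\Big)^{-1}>0.$$ In particular $\mu(s)<0$ for all sufficiently small $s>0$.
   Context: Fix constants $\varepsilon>0$, $\delta>0$, $K>0$ and $6/5<\gamma<4/3$. Let $\varrho_0:[0,R]\to[0,\infty)$ be a Lane–Emden stationary density of radius $R>0$: $\varrho_0$ is smooth and positive on $[0,R)$, $\varrho_0(R)=0$, $P_0:=K\varrho_0^\gamma$ satisfies $\partial_z P_0(z)=-\frac{4\pi\varrho_0(z)}{z^2}\int_0^z\varrho_0(y)y^2\,dy$, and $\varrho_0(z)$ is comparable to $(R-z)^{1/(\gamma-1)}$ for $z$ near $R$. $H^1_2((0,R))$ is the completion of $\{u\in C^\infty([0,R]):u(0)=0\}$ in the norm $\|u\|^2=\int_0^R\frac{|u'|^2+|u|^2}{z^2}dz$. For $s>0$ and $\varphi\in H^1_2((0,R))$ define $$E(\varphi;s)=s\int_0^R\Big(\delta\frac{|\partial_z\varphi|^2}{z^2}+\frac{4\varepsilon}{3z^2}\Big|\partial_z\varphi-3\frac{\varphi}{z}\Big|^2\Big)dz+\int_0^R\Big(\gamma P_0\frac{|\partial_z\varphi|^2}{z^2}+4\frac{\partial_zP_0}{z^3}|\varphi|^2\Big)dz,$$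 $J(\varphi)=\int_0^R\frac{\varrho_0}{z^2}|\varphi|^2dz$, and $\mathcal{A}=\{\varphi\in H^1_2((0,R)):J(\varphi)=1\}$. *)

(* Defs.v *)
From Stdlib Require Import Reals Lra.
Open Scope R_scope.

Definition is_RInt (f : R -> R) (a b l : R) : Prop :=
  exists pr : Riemann_integrable f a b, RiemannInt pr = l.

Definition is_IInt0 (f : R -> R) (Rr l : R) : Prop :=
  forall e, 0 < e -> exists d, 0 < d /\
    forall a, 0 < a -> a < d -> a < Rr ->
      exists l', is_RInt f a Rr l' /\ Rabs (l' - l) < e.

(* x^y for x >= 0 (with 0^y = 0 for y > 0). *)
Definition rpow (x y : R) : R := if Rle_dec x 0 then 0 else Rpower x y.

(* f is C^infinity on the set P, with D n its n-th derivative
   (f : R -> R is an extension; derivatives are two-sided). *)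
Definition smooth_on (P : R -> Prop) (f : R -> R) (D : nat -> R -> R) : Prop :=
  (forall z, P z -> D 0%nat z = f z) /\
  (forall n z, P z -> derivable_pt_lim (D n) z (D (S n) z)).

Definition P0 (K gam : R) (rho0 : R -> R) (z : R) : R := K * rpow (rho0 z) gam.

(* E(phi; s) = e, where dphi = phi' and dP0 = d/dz P_0 *)
Definition E_val (eps delta K gam Rr : R) (rho0 dP0 : R -> R) (s : R)
    (phi dphi : R -> R) (e : R) : Prop :=
  exists I1 I2,
    is_IInt0 (fun z => delta * (dphi z)^2 / z^2
                       + 4 * eps / (3 * z^2) * (dphi z - 3 * phi z / z)^2) Rr I1 /\
    is_IInt0 (fun z => gam * P0 K gam rho0 z * (dphi z)^2 / z^2
                       + 4 * dP0 z / z^3 * (phi z)^2) Rr I2 /\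
    e = s * I1 + I2.

Definition J_val (rho0 : R -> R) (Rr : R) (phi : R -> R) (j : R) : Prop :=
  is_IInt0 (fun z => rho0 z / z^2 * (phi z)^2) Rr j.

(* The set { E(phi;s) : phi in A } with phi ranging over the dense core
   { u smooth on [0,Rr], u(0) = 0, finite H^1_2 norm }. *)
Definition energy_values (eps delta K gam Rr : R) (rho0 dP0 : R -> R) (s : R)
    (e : R) : Prop :=
  exists (phi : R -> R) (D : nat -> R -> R),
    smooth_on (fun z => 0 <= z <= Rr) phi D /\ phi 0 = 0 /\
    (exists nrm, is_IInt0 (fun z => ((D 1%nat z)^2 + (phi z)^2) / z^2) Rr nrm) /\
    J_val rho0 Rr phi 1 /\
    E_val eps delta K gam Rr rho0 dP0 s phi (D 1%nat) e.

(* inf S <= c  (in the extended reals): every lower bound of S is <= c *)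
Definition inf_le (S : R -> Prop) (c : R) : Prop :=
  forall m, (forall e, S e -> m <= e) -> m <= c.

Definition inf_lt (S : R -> Prop) (c : R) : Prop :=
  exists e, S e /\ e < c.

(* Main.v *)
Require Import Defs.
From Stdlib Require Import Reals Lra.
From Coquelicot Require Coquelicot.
Open Scope R_scope.

Module H.
Import Coquelicot.Coquelicot.

Lemma to_defs f a b l : a <= b -> is_RInt f a b l -> Defs.is_RInt f a b l.
Proof.
  intros Hab H. assert (He : ex_RInt f a b) by (exists l; exact H).
  exists (ex_RInt_Reals_0 _ _ _ He). rewrite <- RInt_Reals. apply is_RInt_unique; exact H.
Qed.

Lemma of_defs f a b l : Defs.is_RInt f a b l -> is_RInt f a b l.
Proof.
  intros [pr Hpr]. subst. rewrite <- RInt_Reals. apply (RInt_correct (V:=R_CompleteNormedModule)).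
  apply ex_RInt_Reals_1; exact pr.
Qed.

Lemma IInt0_of f F Rr l : 0 < Rr -> (forall a, 0 < a < Rr -> is_RInt f a Rr (F a)) ->
  continuity_pt F 0 -> F 0 = l -> is_IInt0 f Rr l.
Proof.
  intros HR HF Hc Hl e He. subst l.
  destruct (Hc e He) as [d [Hd Hcd]]. exists d. split; [exact Hd|].
  intros a Ha Had HaR. exists (F a). split.
  - apply to_defs; [lra|]. apply HF; lra.
  - apply (Hcd a). split. split; [exact I| lra]. simpl; unfold Rdist; rewrite Rabs_right; lra.
Qed.

Lemma cont_eq_left (P Q : R -> R) a Rr : a < Rr -> continuity_pt P Rr -> continuity_pt Q Rr ->
  (forall b, a < b < Rr -> P b = Q b) -> P Rr = Q Rr.
Proof.
  intros HaR HP HQ Heq. destruct (Req_dec (P Rr) (Q Rr)) as [E|N]; [exact E|exfalso].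
  set (e := Rabs (P Rr - Q Rr) / 2).
  assert (He : 0 < e) by (unfold e; apply Rdiv_lt_0_compat; [apply Rabs_pos_lt; lra | lra]).
  destruct (HP e He) as [d1 [Hd1 H1]]. destruct (HQ e He) as [d2 [Hd2 H2]].
  set (b := Rr - Rmin (Rmin d1 d2) (Rr - a) / 2).
  assert (Hm1 : Rmin (Rmin d1 d2) (Rr - a) <= d1) by (eapply Rle_trans; apply Rmin_l).
  assert (Hm2 : Rmin (Rmin d1 d2) (Rr - a) <= d2) by (eapply Rle_trans; [apply Rmin_l| apply Rmin_r]).
  assert (Hm3 : Rmin (Rmin d1 d2) (Rr - a) <= Rr - a) by apply Rmin_r.
  assert (Hm0 : 0 < Rmin (Rmin d1 d2) (Rr - a)) by (repeat apply Rmin_glb_lt; lra).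
  assert (Hb : a < b < Rr) by (unfold b; lra).
  assert (Hdb : Rabs (b - Rr) = Rr - b) by (rewrite Rabs_left; lra).
  specialize (H1 b). specialize (H2 b). simpl in H1, H2; unfold Rdist in H1, H2.
  assert (A1 : Rabs (P b - P Rr) < e) by (apply H1; split; [split; [exact I|lra] | simpl; unfold Rdist; rewrite Hdb; unfold b; lra]).
  assert (A2 : Rabs (Q b - Q Rr) < e) by (apply H2; split; [split; [exact I|lra] | simpl; unfold Rdist; rewrite Hdb; unfold b; lra]).
  rewrite (Heq b Hb) in A1. unfold e in *.
  revert A1 A2. unfold Rabs. repeat destruct Rcase_abs; lra.
Qed.

Lemma cpt_ext (f g : R -> R) x d : 0 < d -> (forall y, Rabs (y - x) < d -> f y = g y) ->
  continuity_pt g x -> continuity_pt f x.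
Proof.
  intros Hd Heq Hg e He. destruct (Hg e He) as [a [Ha Hc]]. exists (Rmin a d). split.
  - apply Rmin_glb_lt; lra.
  - intros y [Hy1 Hy2]. simpl in *. unfold Rdist in *.
    assert (y0 : Rabs (x - x) < d) by (rewrite Rminus_diag, Rabs_R0; lra).
    assert (y1 : Rabs (y - x) < d) by (eapply Rlt_le_trans; [exact Hy2| apply Rmin_r]).
    rewrite (Heq y y1), (Heq x y0).
    apply Hc. split; [exact Hy1|]. simpl; unfold Rdist. eapply Rlt_le_trans; [exact Hy2| apply Rmin_l].
Qed.

Lemma cpt_of (f : R -> R) x : continuous f x -> continuity_pt f x.
Proof. intros H; apply continuity_pt_filterlim; exact H. Qed.
Lemma of_cpt (f : R -> R) x : continuity_pt f x -> continuous f x.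
Proof. intros H; apply continuity_pt_filterlim; exact H. Qed.

Lemma rpow_le_id g y : 1 <= g -> 0 <= y <= 1 -> 0 <= rpow y g <= y.
Proof.
  intros Hg Hy. unfold rpow. destruct (Rle_dec y 0); [lra|].
  unfold Rpower. split; [left; apply exp_pos|].
  assert (Hl : ln y <= 0) by (rewrite <- ln_1; apply ln_le; lra).
  rewrite <- (exp_ln y) at 2 by lra.
  destruct (Req_dec (g * ln y) (ln y)) as [E|N]; [rewrite E; lra|].
  left; apply exp_increasing. nra.
Qed.

Lemma rpow_cont g u : 1 <= g -> continuity_pt (fun x => rpow x g) u.
Proof.
  intros Hg. destruct (Rtotal_order u 0) as [Hu|[Hu|Hu]].
  - apply (cpt_ext _ (fun _ => 0) u (-u)); [lra| |apply continuity_pt_const; intros ??; reflexivity].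
    intros y Hy. unfold rpow. destruct (Rle_dec y 0); [reflexivity|].
    exfalso. revert Hy. unfold Rabs; destruct Rcase_abs; lra.
  - subst u. intros e He. exists (Rmin e 1). split; [apply Rmin_glb_lt; lra|].
    intros y [_ Hy]. simpl in *. unfold Rdist in *. rewrite Rminus_0_r in Hy.
    assert (Hz : rpow 0 g = 0) by (unfold rpow; destruct (Rle_dec 0 0); [reflexivity| lra]).
    rewrite Hz, Rminus_0_r.
    assert (Hy1 : Rabs y < e) by (eapply Rlt_le_trans; [exact Hy| apply Rmin_l]).
    assert (Hy2 : Rabs y < 1) by (eapply Rlt_le_trans; [exact Hy| apply Rmin_r]).
    destruct (Rle_dec y 0) as [Hn|Hn].
    + unfold rpow; destruct (Rle_dec y 0); [|lra]. rewrite Rabs_R0; lra.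
    + assert (Hy' : 0 <= y <= 1) by (revert Hy2; unfold Rabs; destruct Rcase_abs; lra).
      destruct (rpow_le_id g y Hg Hy'). rewrite Rabs_right by lra.
      revert Hy1; unfold Rabs; destruct Rcase_abs; lra.
  - apply (cpt_ext _ (fun x => Rpower x g) u u); [lra| |].
    + intros y Hy. unfold rpow. destruct (Rle_dec y 0); [|reflexivity].
      exfalso. revert Hy. unfold Rabs; destruct Rcase_abs; lra.
    + apply derivable_continuous_pt. exists (g * Rpower u (g - 1)). apply derivable_pt_lim_power; lra.
Qed.


Lemma cont_of_derive (f : R -> R) x l : is_derive f x l -> continuous f x.
Proof. intros H. apply continuity_pt_filterlim. apply derivable_continuous_pt. exists l. apply is_derive_Reals. exact H. Qed.

Lemma rmax0_cont x : continuity_pt (fun y => Rmax 0 y) x.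
Proof.
  intros e He. exists e. split; [lra|]. intros y [_ Hy]. simpl in *. unfold Rdist in *.
  revert Hy. unfold Rmax, Rabs. repeat (destruct Rle_dec || destruct Rcase_abs); lra.
Qed.

Lemma locally_of (x d : R) (P : R -> Prop) : 0 < d -> (forall y, Rabs (y - x) < d -> P y) -> locally x P.
Proof. intros Hd H. exists (mkposreal d Hd). intros y Hy. apply H. exact Hy. Qed.

Lemma ex_RInt_cont_pos (f : R -> R) a b : 0 < a -> 0 < b -> (forall z, 0 < z -> continuous f z) -> ex_RInt f a b.
Proof.
  intros Ha Hb Hf. apply (ex_RInt_continuous (V:=R_CompleteNormedModule)). intros z [Hz _]. apply Hf.
  eapply Rlt_le_trans; [|exact Hz]. apply Rmin_glb_lt; lra.
Qed.

Lemma cmul (f g : R -> R) x : continuous f x -> continuous g x -> continuous (fun z => f z * g z) x.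
Proof. intros; apply (continuous_mult f g); auto. Qed.
Lemma cplus (f g : R -> R) x : continuous f x -> continuous g x -> continuous (fun z => f z + g z) x.
Proof. intros; apply (continuous_plus f g); auto. Qed.
Lemma cminus (f g : R -> R) x : continuous f x -> continuous g x -> continuous (fun z => f z - g z) x.
Proof. intros; apply (continuous_plus f (fun z => - g z)); auto. apply (continuous_opp g); auto. Qed.
Lemma cconst (c : R) x : continuous (fun _ : R => c) x.
Proof. apply continuous_const. Qed.

Lemma gen_IInt0 f F Rr l : 0 < Rr -> (forall a, 0 < a < Rr -> is_RInt f a Rr (F a)) ->
  continuous F 0 -> F 0 = l -> is_IInt0 f Rr l.
Proof. intros HR HF Hc Hl. apply (IInt0_of f F); auto. apply cpt_of; exact Hc. Qed.

Lemma poly_IInt0 f (Fp fp : R -> R) Rr : 0 < Rr -> (forall x, is_derive Fp x (fp x)) ->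
  (forall x, continuous fp x) -> (forall x, 0 < x -> f x = fp x) -> is_IInt0 f Rr (Fp Rr - Fp 0).
Proof.
  intros HR Hd Hc He. apply (gen_IInt0 f (fun a => Fp Rr - Fp a)); auto.
  - intros a Ha. apply is_RInt_ext with (f := fp).
    + intros x Hx. rewrite Rmin_left in Hx by lra. symmetry. apply He. lra.
    + apply (is_RInt_derive (V:=R_CompleteNormedModule) Fp fp a Rr); intros; auto.
  - apply cminus; [apply cconst|]. eapply cont_of_derive. apply Hd.
Qed.

Lemma cont_RInt_lower (g : R -> R) b x : (forall y, continuous g y) -> continuous (fun a => RInt g a b) x.
Proof.
  intros Hg. eapply cont_of_derive. apply (is_derive_RInt' g (fun a => RInt g a b) x b).
  - apply filter_forall. intros y. apply (RInt_correct (V:=R_CompleteNormedModule)).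
    apply (ex_RInt_continuous (V:=R_CompleteNormedModule)). intros; apply Hg.
  - apply Hg.
Qed.

End H.

Module M.
Import Coquelicot.Coquelicot.
Import H.

Lemma main (eps delta K gam Rr : R) (rho0 dP0 : R -> R)
    (Drho : nat -> R -> R) (I4 I2 : R) :
  0 < eps -> 0 < delta -> 0 < K -> 6/5 < gam < 4/3 -> 0 < Rr ->
  smooth_on (fun z => 0 <= z < Rr) rho0 Drho ->
  (forall z, 0 <= z < Rr -> 0 < rho0 z) ->
  rho0 Rr = 0 ->
  (forall z, 0 < z < Rr -> derivable_pt_lim (P0 K gam rho0) z (dP0 z)) ->
  (forall z, 0 < z < Rr -> exists m,
      Defs.is_RInt (fun y => rho0 y * y^2) 0 z m /\
      dP0 z = - (4 * PI * rho0 z / z^2) * m) ->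
  (exists c1 c2 eta, 0 < c1 /\ 0 < c2 /\ 0 < eta /\
      forall z, Rr - eta < z < Rr ->
        c1 * Rpower (Rr - z) (1 / (gam - 1)) <= rho0 z /\
        rho0 z <= c2 * Rpower (Rr - z) (1 / (gam - 1))) ->
  Defs.is_RInt (fun z => rho0 z * z^4) 0 Rr I4 ->
  Defs.is_RInt (fun z => (12 - 9 * gam) * K * rpow (rho0 z) gam * z^2) 0 Rr I2 ->
  let C1 := 3 * delta * Rr^3 / I4 in
  let C2 := I2 / I4 in
  0 < C1 /\ 0 < C2 /\
  (forall s, 0 < s ->
     inf_le (energy_values eps delta K gam Rr rho0 dP0 s) (s * C1 - C2)) /\
  (exists s0, 0 < s0 /\ forall s, 0 < s < s0 ->
     inf_lt (energy_values eps delta K gam Rr rho0 dP0 s) 0).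
Proof.
  intros Heps Hdel HK Hgam HR [Hs0 Hs1] Hpos HRz Hder Hlane Hbd HI4 HI2 C1 C2.
  set (rt := fun z => rho0 (Rmax 0 (Rmin z Rr))).
  assert (rt_eq : forall z, 0 <= z <= Rr -> rt z = rho0 z).
  { intros z Hz. unfold rt. rewrite Rmin_left by lra. rewrite Rmax_right by lra. reflexivity. }
  assert (rt_cont : forall x, continuity_pt rt x).
  { intros x. destruct (Rlt_or_le x 0) as [Hx|Hx].
    - apply (cpt_ext _ (fun _ => rho0 0) x (-x)); [lra| |apply continuity_pt_const; intros ??; reflexivity].
      intros y Hy. assert (y < 0) by (revert Hy; unfold Rabs; destruct Rcase_abs; lra).
      unfold rt. rewrite Rmin_left by lra. rewrite Rmax_left by lra. reflexivity.
    - destruct (Rlt_or_le x Rr) as [HxR|HxR].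
      + apply (cpt_ext _ (fun y => Drho 0%nat (Rmax 0 y)) x (Rr - x)); [lra| |].
        * intros y Hy. assert (y < Rr) by (revert Hy; unfold Rabs; destruct Rcase_abs; lra).
          unfold rt. rewrite Rmin_left by lra. rewrite Hs0; [reflexivity|].
          unfold Rmax; destruct Rle_dec; lra.
        * apply (continuity_pt_comp (fun y => Rmax 0 y) (Drho 0%nat)); [apply rmax0_cont|].
          apply derivable_continuous_pt. exists (Drho 1%nat (Rmax 0 x)). apply Hs1.
          unfold Rmax; destruct Rle_dec; lra.
      + destruct HxR as [HxR|HxR].
        * apply (cpt_ext _ (fun _ => rho0 (Rmax 0 Rr)) x (x - Rr)); [lra| |apply continuity_pt_const; intros ??; reflexivity].
          intros y Hy. assert (Rr < y) by (revert Hy; unfold Rabs; destruct Rcase_abs; lra).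
          unfold rt. rewrite Rmin_right by lra. reflexivity.
        * subst x. destruct Hbd as [c1 [c2 [eta [Hc1 [Hc2 [Heta Hb]]]]]].
          intros e He. set (p := 1 / (gam - 1)).
          assert (Hp : 0 < p) by (unfold p; apply Rdiv_lt_0_compat; lra).
          set (d := Rpower (e / c2) (/ p)).
          assert (Hd : 0 < d) by (unfold d, Rpower; apply exp_pos).
          assert (Hdp : Rpower d p = e / c2).
          { unfold d. rewrite Rpower_mult. rewrite Rinv_l by lra. apply Rpower_1.
            apply Rdiv_lt_0_compat; lra. }
          exists (Rmin (Rmin eta d) Rr). split; [repeat apply Rmin_glb_lt; lra|].
          intros y [_ Hy]. simpl in *. unfold Rdist in *.
          assert (Hm1 : Rmin (Rmin eta d) Rr <= eta) by (eapply Rle_trans; apply Rmin_l).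
          assert (Hm2 : Rmin (Rmin eta d) Rr <= d) by (eapply Rle_trans; [apply Rmin_l| apply Rmin_r]).
          assert (Hm3 : Rmin (Rmin eta d) Rr <= Rr) by apply Rmin_r.
          assert (HrR : rt Rr = 0) by (rewrite rt_eq by lra; exact HRz).
          rewrite HrR, Rminus_0_r.
          destruct (Rlt_or_le y Rr) as [Hy1|Hy1].
          -- assert (HyR : Rr - y < Rmin (Rmin eta d) Rr) by (revert Hy; unfold Rabs; destruct Rcase_abs; lra).
             rewrite rt_eq by lra.
             destruct (Hb y) as [_ Hup]; [lra|].
             assert (Hpy : 0 < rho0 y) by (apply Hpos; lra).
             assert (Rpower (Rr - y) p < Rpower d p) by (apply Rlt_Rpower_l; lra).
             rewrite Rabs_right by lra. unfold p in *. rewrite Hdp in *.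
             apply Rle_lt_trans with (1 := Hup).
             replace e with (c2 * (e / c2)) by (field; lra).
             apply Rmult_lt_compat_l; lra.
          -- unfold rt. rewrite Rmin_right by lra. rewrite Rmax_right by lra. rewrite HRz, Rabs_R0. exact He. }

  set (Pt := fun z => K * rpow (rt z) gam).
  assert (Pt_cont : forall x, continuous Pt x).
  { intros x. apply (continuous_mult (fun _ => K) (fun z => rpow (rt z) gam)); [apply continuous_const|].
    apply (continuous_comp rt (fun u => rpow u gam)); apply of_cpt; [apply rt_cont| apply rpow_cont; lra]. }
  assert (Pt_eq : forall z, 0 <= z <= Rr -> Pt z = P0 K gam rho0 z).
  { intros z Hz. unfold Pt, P0. rewrite rt_eq by lra. reflexivity. }
  assert (PtR : Pt Rr = 0).
  { rewrite Pt_eq by lra. unfold P0. rewrite HRz. unfold rpow. destruct (Rle_dec 0 0); [ring| lra]. }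
  set (g2 := fun y => rt y * y^2).
  assert (g2_cont : forall x, continuous g2 x).
  { intros x. apply (continuous_mult rt (fun y => y^2)); [apply of_cpt, rt_cont|].
    eapply cont_of_derive. auto_derive; [exact I| reflexivity]. }
  assert (ex_g2 : forall a b, ex_RInt g2 a b).
  { intros a b. apply (ex_RInt_continuous (V:=R_CompleteNormedModule)). intros; apply g2_cont. }
  set (Mf := fun z => RInt g2 0 z).
  assert (M_cont : forall z, continuous Mf z).
  { intros z. apply (continuous_RInt_1 g2 0 z Mf). apply filter_forall. intros y.
    apply (RInt_correct (V:=R_CompleteNormedModule)). apply ex_g2. }
  set (G := fun z => -(4*PI*rt z / z^2) * Mf z).
  assert (G_cont : forall z, 0 < z -> continuous G z).
  { intros z Hz. apply (continuous_mult (fun z => -(4*PI*rt z / z^2)) Mf); [|apply M_cont].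
    apply (continuous_opp (fun z => 4*PI*rt z / z^2)).
    apply (continuous_mult (fun z => 4*PI*rt z) (fun z => / z^2)).
    - apply (continuous_mult (fun _ => 4*PI) rt); [apply continuous_const| apply of_cpt, rt_cont].
    - eapply cont_of_derive. auto_derive; [|reflexivity]. intros Hc. nra. }
  assert (HdG : forall z, 0 < z < Rr -> dP0 z = G z).
  { intros z Hz. destruct (Hlane z Hz) as [m [Hm Hd]]. rewrite Hd. unfold G. rewrite rt_eq by lra.
    f_equal. unfold Mf. symmetry. apply is_RInt_unique.
    apply is_RInt_ext with (f := fun y => rho0 y * y^2); [|apply of_defs; exact Hm].
    intros x Hx. rewrite Rmin_left, Rmax_right in Hx by lra. unfold g2. rewrite rt_eq by lra. reflexivity. }
  assert (I4val : is_RInt (fun z => rt z * z^4) 0 Rr I4).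
  { apply is_RInt_ext with (f := fun z => rho0 z * z^4); [|apply of_defs; exact HI4].
    intros x Hx. rewrite Rmin_left, Rmax_right in Hx by lra. rewrite rt_eq by lra. reflexivity. }
  assert (I4pos : 0 < I4).
  { rewrite <- (is_RInt_unique _ _ _ _ I4val). apply RInt_gt_0; [lra| |].
    - intros x Hx. rewrite rt_eq by lra. apply Rmult_lt_0_compat; [apply Hpos; lra| apply pow_lt; lra].
    - intros x _. apply (continuous_mult rt (fun y => y^4)); [apply of_cpt, rt_cont|].
      eapply cont_of_derive. auto_derive; [exact I| reflexivity]. }
  set (Q := RInt (fun z => Pt z * z^2) 0 Rr).
  assert (Pz_cont : forall x, continuous (fun z => Pt z * z^2) x).
  { intros x. apply (continuous_mult Pt (fun y => y^2)); [apply Pt_cont|].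
    eapply cont_of_derive. auto_derive; [exact I| reflexivity]. }
  assert (ex_Pz : forall a b, ex_RInt (fun z => Pt z * z^2) a b).
  { intros a b. apply (ex_RInt_continuous (V:=R_CompleteNormedModule)). intros; apply Pz_cont. }
  assert (I2val : I2 = (12 - 9 * gam) * Q).
  { assert (H1 := is_RInt_scal _ _ _ (12 - 9 * gam) _ (RInt_correct (V:=R_CompleteNormedModule) _ _ _ (ex_Pz 0 Rr))).
    assert (H2 : is_RInt (fun z => (12 - 9 * gam) * K * rpow (rho0 z) gam * z^2) 0 Rr ((12 - 9 * gam) * Q)).
    { apply is_RInt_ext with (2 := H1). intros x Hx. rewrite Rmin_left, Rmax_right in Hx by lra.
      change ((12 - 9 * gam) * (Pt x * x^2) = (12 - 9 * gam) * K * rpow (rho0 x) gam * x ^ 2).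
      rewrite Pt_eq by lra. unfold P0. ring. }
    apply of_defs in HI2. rewrite <- (is_RInt_unique _ _ _ _ HI2). apply is_RInt_unique. exact H2. }
  assert (Qpos : 0 < Q).
  { unfold Q. apply RInt_gt_0; [lra| |intros; apply Pz_cont].
    intros x Hx. unfold Pt. rewrite rt_eq by lra. apply Rmult_lt_0_compat; [|apply pow_lt; lra].
    apply Rmult_lt_0_compat; [lra|]. unfold rpow. destruct (Rle_dec (rho0 x) 0) as [Hn|_].
    - assert (0 < rho0 x) by (apply Hpos; lra). lra.
    - apply exp_pos. }

  assert (hG3 : forall a, 0 < a < Rr -> is_RInt (fun z => G z * z^3) a Rr
                  (- Pt a * a^3 - 3 * RInt (fun z => Pt z * z^2) a Rr)).
  { intros a Ha.
    set (h := fun z => G z * z^3).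
    assert (h_cont : forall z, 0 < z -> continuous h z).
    { intros z Hz. apply cmul; [apply G_cont; lra|]. eapply cont_of_derive. auto_derive; [exact I| reflexivity]. }
    set (Phi := (fun b => RInt h a b) : R -> R).
    set (Psi := fun b => Pt b * b^3 - Pt a * a^3 - 3 * RInt (fun z => Pt z * z^2) a b).
    assert (Heq : forall b, a < b < Rr -> Phi b = Psi b).
    { intros b Hb. unfold Phi. apply is_RInt_unique.
      assert (HF : is_RInt (fun z => h z + 3 * (Pt z * z^2)) a b
                     (minus ((fun z => P0 K gam rho0 z * z^3) b) ((fun z => P0 K gam rho0 z * z^3) a))).
      { apply (is_RInt_derive (V:=R_CompleteNormedModule) (fun z => P0 K gam rho0 z * z^3)).
        - intros x Hx. rewrite Rmin_left, Rmax_right in Hx by lra.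
          apply is_derive_Reals.
          assert (D := derivable_pt_lim_mult _ _ x _ _ (Hder x ltac:(lra)) (derivable_pt_lim_pow x 3)).
          replace (h x + 3 * (Pt x * x^2)) with (dP0 x * x^3 + P0 K gam rho0 x * (INR 3 * x ^ Nat.pred 3)).
          + exact D.
          + unfold h. rewrite HdG by lra. rewrite Pt_eq by lra. simpl. ring.
        - intros x Hx. rewrite Rmin_left, Rmax_right in Hx by lra.
          apply cplus; [apply h_cont; lra|]. apply cmul; [apply cconst| apply Pz_cont]. }
      assert (H3 := is_RInt_scal _ _ _ 3 _ (RInt_correct (V:=R_CompleteNormedModule) _ _ _ (ex_Pz a b))).
      assert (H4 := is_RInt_minus _ _ _ _ _ _ HF H3).
      assert (H5 : is_RInt h a b (minus (minus ((fun z => P0 K gam rho0 z * z^3) b)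
            ((fun z => P0 K gam rho0 z * z^3) a)) (scal 3 (RInt (fun z : R => Pt z * z ^ 2) a b)))).
      { apply is_RInt_ext with (2 := H4). intros x _.
        change (h x + 3 * (Pt x * x^2) - 3 * (Pt x * x^2) = h x). ring. }
      match type of H5 with is_RInt _ _ _ ?v => replace (Psi b) with v; [exact H5|] end.
      unfold Psi. cbv beta. rewrite !Pt_eq by lra. reflexivity. }
    assert (Hex : forall y, a < y -> ex_RInt h a y).
    { intros y Hy. apply ex_RInt_cont_pos; [lra|lra|exact h_cont]. }
    assert (Phi_c : continuity_pt Phi Rr).
    { apply cpt_of. apply (continuous_RInt_1 h a Rr Phi).
      apply (locally_of Rr (Rr - a)); [lra|]. intros y Hy.
      apply (RInt_correct (V:=R_CompleteNormedModule)). apply Hex.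
      revert Hy; unfold Rabs; destruct Rcase_abs; lra. }
    assert (Psi_c : continuity_pt Psi Rr).
    { apply cpt_of. unfold Psi. apply cminus; [apply cminus|].
      - apply cmul; [apply Pt_cont|]. eapply cont_of_derive. auto_derive; [exact I| reflexivity].
      - apply cconst.
      - apply cmul; [apply cconst|]. apply (continuous_RInt_1 (fun z => Pt z * z^2) a Rr (fun b => RInt (fun z => Pt z * z^2) a b)).
        apply filter_forall. intros y. apply (RInt_correct (V:=R_CompleteNormedModule)). apply ex_Pz. }
    assert (E := cont_eq_left Phi Psi a Rr ltac:(lra) Phi_c Psi_c Heq).
    unfold Psi in E. rewrite PtR in E.
    replace (- Pt a * a ^ 3 - 3 * RInt (fun z : R => Pt z * z ^ 2) a Rr) with (Phi Rr) by (rewrite E; ring).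
    apply (RInt_correct (V:=R_CompleteNormedModule)). apply Hex. lra. }

  set (c := / sqrt I4).
  assert (Hcc : c * c = / I4).
  { unfold c. rewrite <- Rinv_mult. rewrite sqrt_sqrt by lra. reflexivity. }
  assert (RInt4 : RInt (fun z => rt z * z^4) 0 Rr = I4) by (apply is_RInt_unique; exact I4val).
  assert (Hev : forall s, energy_values eps delta K gam Rr rho0 dP0 s (s * C1 - C2)).
  { intros s.
    exists (fun z => c * z^3).
    exists (fun n z => match n with 0%nat => c * z^3 | 1%nat => 3 * c * z^2 | 2%nat => 6 * c * z
                                  | 3%nat => 6 * c | _ => 0 end).
    split; [|split; [|split; [|split]]].
    - split; [intros; reflexivity|]. intros n z _.
      destruct n as [|[|[|[|n]]]]; simpl; try apply derivable_pt_lim_const;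
        apply is_derive_Reals; auto_derive; try exact I; ring.
    - ring.
    - eexists. apply (poly_IInt0 _ (fun z => 3 * c * c * z^3 + c * c * z^5 / 5) (fun z => 9 * c * c * z^2 + c * c * z^4)); [lra| | |].
      + intros x. auto_derive; [exact I| field].
      + intros x. eapply cont_of_derive. auto_derive; [exact I| reflexivity].
      + intros x Hx. simpl. field. lra.
    - unfold J_val. apply (gen_IInt0 _ (fun a => c * c * RInt (fun z => rt z * z^4) a Rr)); [lra| | |].
      + intros a Ha.
        assert (Hx4 : forall y, continuous (fun z => rt z * z^4) y).
        { intros y. apply cmul; [apply of_cpt, rt_cont|]. eapply cont_of_derive. auto_derive; [exact I| reflexivity]. }
        assert (H1 := is_RInt_scal _ _ _ (c * c) _ (RInt_correct (V:=R_CompleteNormedModule) _ _ _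
                   ((ex_RInt_continuous (V:=R_CompleteNormedModule) (fun z => rt z * z^4) a Rr) (fun z _ => Hx4 z)))).
        apply is_RInt_ext with (2 := H1). intros x Hx. rewrite Rmin_left, Rmax_right in Hx by lra.
        change (c * c * (rt x * x^4) = rho0 x / x^2 * (c * x^3)^2). rewrite rt_eq by lra. field. lra.
      + apply cmul; [apply cconst|]. apply cont_RInt_lower. intros y. apply cmul; [apply of_cpt, rt_cont|].
        eapply cont_of_derive. auto_derive; [exact I| reflexivity].
      + change (c * c * RInt (fun z => rt z * z^4) 0 Rr = 1). rewrite RInt4, Hcc. field. lra.
    - exists (3 * delta * c * c * Rr^3 - 3 * delta * c * c * 0^3).
      exists (c * c * 9 * gam * Q + 4 * c * c * (- Pt 0 * 0^3 - 3 * Q)).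
      split; [|split].
      + apply (poly_IInt0 _ (fun z => 3 * delta * c * c * z^3) (fun z => 9 * delta * c * c * z^2)); [lra| | |].
        * intros x. auto_derive; [exact I| field].
        * intros x. eapply cont_of_derive. auto_derive; [exact I| reflexivity].
        * intros x Hx. simpl. field. lra.
      + apply (gen_IInt0 _ (fun a => c * c * 9 * gam * RInt (fun z => Pt z * z^2) a Rr
                                   + 4 * c * c * (- Pt a * a^3 - 3 * RInt (fun z => Pt z * z^2) a Rr))); [lra| | |].
        * intros a Ha.
          assert (H1 := is_RInt_scal _ _ _ (c * c * 9 * gam) _ (RInt_correct (V:=R_CompleteNormedModule) _ _ _ (ex_Pz a Rr))).
          assert (H2 := is_RInt_scal _ _ _ (4 * c * c) _ (hG3 a Ha)).
          assert (H3 := is_RInt_plus _ _ _ _ _ _ H1 H2).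
          apply is_RInt_ext with (2 := H3). intros x Hx. rewrite Rmin_left, Rmax_right in Hx by lra.
          change (c * c * 9 * gam * (Pt x * x^2) + 4 * c * c * (G x * x^3) =
                  gam * P0 K gam rho0 x * (3 * c * x^2)^2 / x^2 + 4 * dP0 x / x^3 * (c * x^3)^2).
          rewrite HdG, Pt_eq by lra. field. lra.
        * apply cplus.
          -- apply cmul; [apply cconst|]. apply cont_RInt_lower. exact Pz_cont.
          -- apply cmul; [apply cconst|]. apply cminus.
             ++ apply cmul; [apply (continuous_opp Pt); apply Pt_cont|].
                eapply cont_of_derive. auto_derive; [exact I| reflexivity].
             ++ apply cmul; [apply cconst|]. apply cont_RInt_lower. exact Pz_cont.
        * reflexivity.
      + unfold C1, C2. rewrite I2val. simpl. assert (E : forall x, x * c * c = x * (c * c)) by (intros; ring). rewrite !E, !Hcc. field. lra. }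
  assert (C1pos : 0 < C1) by (unfold C1; apply Rdiv_lt_0_compat; [apply Rmult_lt_0_compat; [lra| apply pow_lt; lra] | lra]).
  assert (C2pos : 0 < C2) by (unfold C2; rewrite I2val; apply Rdiv_lt_0_compat; [apply Rmult_lt_0_compat; lra | lra]).
  split; [exact C1pos|]. split; [exact C2pos|]. split.
  - intros s _ m Hm. apply Hm. apply Hev.
  - exists (C2 / C1). split; [apply Rdiv_lt_0_compat; lra|].
    intros s Hs. exists (s * C1 - C2). split; [apply Hev|].
    destruct Hs as [Hsa Hsb]. apply Rmult_lt_compat_r with (r := C1) in Hsb; [|lra].
    replace (C2 / C1 * C1) with C2 in Hsb by (field; lra). lra.
Qed.
End M.

Theorem lemma2p7 (eps delta K gam Rr : R) (rho0 dP0 : R -> R)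
    (Drho : nat -> R -> R) (I4 I2 : R) :
  0 < eps -> 0 < delta -> 0 < K -> 6/5 < gam < 4/3 -> 0 < Rr ->
  (* Lane-Emden stationary density of radius Rr *)
  smooth_on (fun z => 0 <= z < Rr) rho0 Drho ->
  (forall z, 0 <= z < Rr -> 0 < rho0 z) ->
  rho0 Rr = 0 ->
  (forall z, 0 < z < Rr -> derivable_pt_lim (P0 K gam rho0) z (dP0 z)) ->
  (forall z, 0 < z < Rr -> exists m,
      is_RInt (fun y => rho0 y * y^2) 0 z m /\
      dP0 z = - (4 * PI * rho0 z / z^2) * m) ->
  (exists c1 c2 eta, 0 < c1 /\ 0 < c2 /\ 0 < eta /\
      forall z, Rr - eta < z < Rr ->
        c1 * Rpower (Rr - z) (1 / (gam - 1)) <= rho0 z /\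
        rho0 z <= c2 * Rpower (Rr - z) (1 / (gam - 1))) ->
  (* the integrals defining C1 and C2 *)
  is_RInt (fun z => rho0 z * z^4) 0 Rr I4 ->
  is_RInt (fun z => (12 - 9 * gam) * K * rpow (rho0 z) gam * z^2) 0 Rr I2 ->
  let C1 := 3 * delta * Rr^3 / I4 in
  let C2 := I2 / I4 in
  0 < C1 /\ 0 < C2 /\
  (forall s, 0 < s ->
     inf_le (energy_values eps delta K gam Rr rho0 dP0 s) (s * C1 - C2)) /\
  (exists s0, 0 < s0 /\ forall s, 0 < s < s0 ->
     inf_lt (energy_values eps delta K gam Rr rho0 dP0 s) 0).
Proof. exact (M.main eps delta K gam Rr rho0 dP0 Drho I4 I2). Qed.
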